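(* Let $x$ be a stable g-matching with $x\ne x^{\max}$, let $w\in W$, and let $(c(1),a(1)),\dots,(c(k),a(k))$ be pairwise edge-disjoint essential $w$-pairs under $x$. Let $I\subseteq\{1,\dots,k\}$ and $z^I:=x_w+\sum_{i\in I}(\mathbf 1^{a(i)}-\mathbf 1^{c(i)})$. Then: (i) $z^I$ is acceptable, i.e. $C_w(z^I)=z^I$; (ii) no edge $e\in U_F^+(x)$ is interesting for $w$ under $z^I$; and (iii) for each $j\in\{1,\dots,k\}\setminus I$, the pair $(c(j),a(j))$ is essential under $z^I$ (with $z^I$ in place of $x_w$ in the definitions of legal and essential $w$-pairs).
   Context: Let $G=(V,E)$ be a finite bipartite graph with color classes $W$ and $F$; the edge joining $w\in W$ and $f\in F$ is written $wf$. Let $b\in\mathbb Z_+^E$ be capacities. For $v\in V$, $E_v$ is the set of edges at $v$, $\mathcal B_v=\{z\in\mathbb Z_+^{E_v}: z\le b|_{E_v}\}$, $\mathbf 1^e$ the unit vector of $e$, $|z|=\sum_e|z(e)|$, $\wedge,\vee$ componentwise min/max. Each $v$ has a choice function $C_v:\mathcal B_v\to\mathcal B_v$ with $C_v(z)\le z$ and, for all $z,z'$: (A1) $z\ge z'\ge C_v(z)\Rightarrow C_v(z')=C_v(z)$; (A2) $z\ge z'\Rightarrow C_v(z)\wedge z'\le C_v(z')$; (A3) $z\ge z'\Rightarrow|C_v(z)|\ge|C_v(z')|$. $z$ is acceptable if $C_v(z)=z$; for distinct acceptable $z,z'$, $z'\prec_v z$ iff $C_v(z\vee z')=z$. $x_v$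 = restriction of $x$ to $E_v$. A g-matching is $x\in\mathbb Z_+^E$, $x\le b$, each $x_v$ acceptable; $x\prec_F y$ (distinct) iff $x_f\preceq_f y_f$ for all $f\in F$. $e\in E_v$ is interesting for $v$ under acceptable $z$ if some $z'\in\mathcal B_v$ has $z'(e)>z(e)$, $z'(e')=z(e')$ for $e'\neq e$, $C_v(z')(e)>z(e)$; $e=wf$ is interesting for $v\in\{w,f\}$ under a g-matching $x$ if so under $x_v$, and blocks $x$ if interesting for both endpoints; stable g-matchings (no blocking edge) form a finite lattice under $\prec_F$ with maximum $x^{\max}$. For stable $x$: $U_F^+(x)$ = edges $wf$ interesting for $f$ under $x$; $U_F^-(x)$ = edges $wf$ with $x(wf)>0$ not interesting for $f$ under $x$. For $w\in W$, a legal $w$-pair under $x$ is $(c,a)$ with $c\in U_F^-(x)\cap E_w$, $a\in U_F^+(x)\cap E_w$ and $C_w(x_w+\mathbf 1^a-\mathbf 1^c)=x_w+\mathbf 1^a-\mathbf 1^c$; it is essential if no $d\in(U_F^+(x)\cap E_w)\setminus\{a\}$ is interesting for $w$ under $x_w+\mathbf 1^a-\mathbf 1^c$. *)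

(* Defs.v *)
From mathcomp Require Import all_boot.
Set Implicit Arguments. Unset Strict Implicit. Unset Printing Implicit Defensive.

Section GMatch.
(* Bipartite graph: colour classes W and F, edge set E; edge e joins ew e and ef e. *)
Variables (W F E : finType) (ew : E -> W) (ef : E -> F).
Variable b : E -> nat.
(* vertices are W + F; vectors in Z_+^{E_v} are represented as functions E -> nat
   vanishing outside E_v *)
Definition vert := (W + F)%type.
Variable C : vert -> {ffun E -> nat} -> {ffun E -> nat}.

Definition incident (v : vert) (e : E) : bool :=
  match v with inl w => ew e == w | inr f => ef e == f end.

Definition simple_bip : Prop := injective (fun e => (ew e, ef e)).

Definition inB (v : vert) (z : {ffun E -> nat}) : Prop :=
  (forall e, z e <= b e) /\ (forall e, ~~ incident v e -> z e = 0).

Definition vle (z z' : {ffun E -> nat}) : Prop := forall e, z e <= z' e.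
Definition vmin (z z' : {ffun E -> nat}) : {ffun E -> nat} := [ffun e => minn (z e) (z' e)].
Definition vmax (z z' : {ffun E -> nat}) : {ffun E -> nat} := [ffun e => maxn (z e) (z' e)].
Definition vsize (z : {ffun E -> nat}) : nat := \sum_(e : E) z e.

(* C_v : B_v -> B_v, C_v(z) <= z, and axioms (A1)-(A3) *)
Definition choice_axioms : Prop :=
  forall v : vert,
    (forall z, inB v z -> inB v (C v z) /\ vle (C v z) z) /\
    (forall z z', inB v z -> inB v z' -> vle z' z -> vle (C v z) z' ->
        C v z' = C v z) /\
    (forall z z', inB v z -> inB v z' -> vle z' z ->
        vle (vmin (C v z) z') (C v z')) /\
    (forall z z', inB v z -> inB v z' -> vle z' z ->
        vsize (C v z') <= vsize (C v z)).

Definition acceptable (v : vert) (z : {ffun E -> nat}) : Prop :=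
  inB v z /\ C v z = z.

Definition prec (v : vert) (z' z : {ffun E -> nat}) : Prop :=
  acceptable v z /\ acceptable v z' /\ z <> z' /\ C v (vmax z z') = z.
Definition preceq (v : vert) (z' z : {ffun E -> nat}) : Prop :=
  (acceptable v z /\ z' = z) \/ prec v z' z.

Definition restr (v : vert) (x : {ffun E -> nat}) : {ffun E -> nat} :=
  [ffun e => if incident v e then x e else 0].

Definition gmatching (x : {ffun E -> nat}) : Prop :=
  (forall e, x e <= b e) /\ (forall v, acceptable v (restr v x)).

Definition precF (x y : {ffun E -> nat}) : Prop :=
  x <> y /\ forall f : F, preceq (inr f) (restr (inr f) x) (restr (inr f) y).
Definition preceqF (x y : {ffun E -> nat}) : Prop := x = y \/ precF x y.

Definition interesting (v : vert) (z : {ffun E -> nat}) (e : E) : Prop :=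
  incident v e /\
  exists z' : {ffun E -> nat}, inB v z' /\ z e < z' e /\
    (forall e', e' != e -> z' e' = z e') /\ z e < C v z' e.

Definition interesting_at (v : vert) (x : {ffun E -> nat}) (e : E) : Prop :=
  interesting v (restr v x) e.

Definition blocks (x : {ffun E -> nat}) (e : E) : Prop :=
  interesting_at (inl (ew e)) x e /\ interesting_at (inr (ef e)) x e.

Definition stable (x : {ffun E -> nat}) : Prop :=
  gmatching x /\ forall e, ~ blocks x e.

Definition is_max_stable (xm : {ffun E -> nat}) : Prop :=
  stable xm /\ forall y, stable y -> preceqF y xm.

Definition UFplus (x : {ffun E -> nat}) (e : E) : Prop :=
  interesting_at (inr (ef e)) x e.
Definition UFminus (x : {ffun E -> nat}) (e : E) : Prop :=
  0 < x e /\ ~ interesting_at (inr (ef e)) x e.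

(* z + 1^a - 1^c (truncated subtraction; only used with z c > 0) *)
Definition swap (z : {ffun E -> nat}) (a c : E) : {ffun E -> nat} :=
  [ffun e => z e + (e == a) - (e == c)].

(* legal w-pair (c, a) under x, with z in place of x_w *)
Definition legal (x : {ffun E -> nat}) (w : W) (z : {ffun E -> nat}) (c a : E) : Prop :=
  [/\ UFminus x c /\ ew c = w, UFplus x a /\ ew a = w, 0 < z c &
      C (inl w) (swap z a c) = swap z a c].

Definition essential (x : {ffun E -> nat}) (w : W) (z : {ffun E -> nat}) (c a : E) : Prop :=
  legal x w z c a /\
  forall d, UFplus x d -> ew d = w -> d != a ->
    ~ interesting (inl w) (swap z a c) d.

(* z^I = x_w + sum_{i in I} (1^{a i} - 1^{c i}) *)
Definition zI (k : nat) (x : {ffun E -> nat}) (w : W) (c a : 'I_k -> E) (I : {set 'I_k})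
  : {ffun E -> nat} :=
  [ffun e => restr (inl w) x e + #|[set i in I | a i == e]| - #|[set i in I | c i == e]|].

End GMatch.

(* Main.v *)
Require Import Defs.
From mathcomp Require Import all_boot.
From mathcomp Require Import zify.
Set Implicit Arguments. Unset Strict Implicit. Unset Printing Implicit Defensive.

Lemma cnt_sum (k : nat) (I : {set 'I_k}) (P : pred 'I_k) :
  #|[set i in I | P i]| = \sum_(i in I) (P i : nat).
Proof.
rewrite -sum1_card big_mkcond /= [RHS]big_mkcond /=.
apply: eq_bigr => i _; rewrite !inE; by case: (i \in I); case: (P i).
Qed.

Lemma cnt_U1 (k : nat) (I : {set 'I_k}) (P : pred 'I_k) j : j \notin I ->
  #|[set i in j |: I | P i]| = P j + #|[set i in I | P i]|.
Proof. by move=> jI; rewrite !cnt_sum big_setU1. Qed.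

Lemma cnt_cases (k : nat) (I : {set 'I_k}) (P : pred 'I_k) :
  (forall i j, P i -> P j -> i = j) ->
  (#|[set i in I | P i]| = 0 /\ forall i, i \in I -> ~~ P i) \/
  (exists2 i, i \in I & P i /\ #|[set i in I | P i]| = 1).
Proof.
move=> Pinj.
case: (boolP [exists i, (i \in I) && P i]) => [/existsP [i /andP [iI Pi]]|/existsPn H].
  right; exists i => //; split => //.
  suff ->: [set i0 in I | P i0] = [set i] by rewrite cards1.
  apply/setP => j; rewrite !inE; apply/andP/eqP => [[_ Pj]|->]; first exact: Pinj.
  by [].
left; split; last by move=> i iI; have := H i; rewrite iI.
apply/eqP; rewrite cards_eq0; apply/eqP/setP => i; rewrite !inE.
by have := H i; case: (i \in I); case: (P i).
Qed.

Lemma sum_cnt (E : finType) (k : nat) (I : {set 'I_k}) (a : 'I_k -> E) :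
  \sum_(d : E) #|[set i in I | a i == d]| = #|I|.
Proof.
under eq_bigr => d _ do rewrite cnt_sum.
rewrite exchange_big /= -sum1_card; apply: eq_bigr => i _.
rewrite (bigD1 (a i)) //= eqxx big1 // => d /negPf; by rewrite eq_sym => ->.
Qed.

Section Main.
Variables (W F E : finType) (ew : E -> W) (ef : E -> F) (b : E -> nat)
  (C : vert W F -> {ffun E -> nat} -> {ffun E -> nat}).
Hypothesis HC : choice_axioms ew ef b C.
Variables (x : {ffun E -> nat}).
Hypothesis Hx : stable ew ef b C x.
Variables (w : W) (k : nat) (c a : 'I_k -> E).
Hypothesis Hdisj : forall i j : 'I_k, i != j ->
     [/\ c i != c j, c i != a j & a i != a j].
Hypothesis Hess : forall i : 'I_k, essential ew ef b C x w (restr ew ef (inl w) x) (c i) (a i).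

Local Notation v := (inl w : vert W F).
Local Notation Cw := (C v).
Local Notation inBw := (inB ew ef b v).
Local Notation intw := (interesting ew ef b C v).
Local Notation UP := (UFplus ew ef b C x).
Local Notation y := (restr ew ef (inl w) x).
Local Notation T I := (zI ew ef x w c a I).
Local Notation nA I d := #|[set i in I | a i == d]|.
Local Notation nC I d := #|[set i in I | c i == d]|.
Local Notation yi i := (swap y (a i) (c i)).

Lemma HC1 (z : {ffun E -> nat}) : inBw z -> inBw (Cw z) /\ vle (Cw z) z.
Proof. by case: (HC v) => H _; apply: H. Qed.
Lemma HA1 (z z' : {ffun E -> nat}) : inBw z -> inBw z' -> vle z' z -> vle (Cw z) z' -> Cw z' = Cw z.
Proof. by case: (HC v) => _ [H _]; apply: H. Qed.
Lemma HA2 (z z' : {ffun E -> nat}) : inBw z -> inBw z' -> vle z' z -> vle (vmin (Cw z) z') (Cw z').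
Proof. by case: (HC v) => _ [_ [H _]]; apply: H. Qed.
Lemma HA3 (z z' : {ffun E -> nat}) : inBw z -> inBw z' -> vle z' z -> vsize (Cw z') <= vsize (Cw z).
Proof. by case: (HC v) => _ [_ [_ H]]; apply: H. Qed.

Lemma not_int_bound (u u' : {ffun E -> nat}) d : inBw u' -> u d < u' d ->
  (forall g, g != d -> u' g = u g) -> ~ intw u d -> incident ew ef v d -> Cw u' d <= u d.
Proof.
move=> Hu' lt eq nint inc; rewrite leqNgt; apply/negP => lt2.
by apply: nint; split => //; exists u'.
Qed.

Lemma Gp (u N : {ffun E -> nat}) : acceptable ew ef b C v u -> inBw N -> vle u N ->
  (forall d, u d < N d -> ~ intw u d) -> Cw N = u.
Proof.
move=> [Hu Cu] HN uN Hint.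
have key : vle (Cw N) u.
  move=> d; case: (leqP (N d) (u d)) => [Nu|uN'].
    by apply: leq_trans Nu; case: (HC1 HN) => _; apply.
  pose ud : {ffun E -> nat} := [ffun g => if g == d then N d else u g].
  have inc : incident ew ef v d.
    apply/negPn/negP => ni; have := HN.2 d ni; move: uN'; case: (N d) => //.
  have Hud : inBw ud.
    split => g; rewrite ffunE; case: eqP => [->|_].
    - exact: (HN.1 d).
    - exact: (Hu.1 g).
    - by move=> ng; apply: (HN.2 d ng).
    - by move=> ng; apply: (Hu.2 g ng).
  have udN : vle ud N by move=> g; rewrite ffunE; case: eqP => [->|_] //.
  have b1 := HA2 HN Hud udN d.
  have b2 : Cw ud d <= u d.
    apply: (not_int_bound Hud) => //; first by rewrite ffunE eqxx.
    - by move=> g /negPf; rewrite ffunE => ->.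
    - exact: Hint.
  move: b1; rewrite ffunE ffunE eqxx => b1.
  have := leq_trans b1 b2; rewrite /minn; case: ltnP => // _ H; lia.
by rewrite -(HA1 HN Hu uN key).
Qed.


Lemma y_acc : acceptable ew ef b C v y.
Proof. by case: Hx => [[_ H] _]; apply: H. Qed.
Lemma y_inB : inBw y.
Proof. exact: y_acc.1. Qed.

Lemma yE d : y d = if ew d == w then x d else 0.
Proof. by rewrite ffunE. Qed.

Lemma ewa i : ew (a i) = w.
Proof. by case: (Hess i) => [[_ [_ H] _ _] _]. Qed.
Lemma ewc i : ew (c i) = w.
Proof. by case: (Hess i) => [[[_ H] _ _ _] _]. Qed.
Lemma UPa i : UP (a i).
Proof. by case: (Hess i) => [[_ [H _] _ _] _]. Qed.
Lemma yc i : 0 < y (c i).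
Proof. by case: (Hess i) => [[_ _ H _] _]. Qed.
Lemma UPnc d i : UP d -> c i != d.
Proof.
move=> Hd; apply/eqP => E1; subst d.
by case: (Hess i) => [[[[_ H] _] _ _ _] _]; apply: H.
Qed.
Lemma ainj i j : a i = a j -> i = j.
Proof.
move=> E1; case: (eqVneq i j) => // ij.
by case: (Hdisj ij) => _ _; rewrite E1 eqxx.
Qed.
Lemma cinj i j : c i = c j -> i = j.
Proof.
move=> E1; case: (eqVneq i j) => // ij.
by case: (Hdisj ij); rewrite E1 eqxx.
Qed.
Lemma ca i j : c i != a j.
Proof.
case: (eqVneq i j) => [->|ij]; first exact: UPnc (UPa j).
by case: (Hdisj ij).
Qed.

Lemma acF i : (a i == c i) = false.
Proof. by have := ca i i; rewrite eq_sym; case: eqP. Qed.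
Lemma caF i : (c i == a i) = false.
Proof. by have := ca i i; case: eqP. Qed.

Lemma UPb d : UP d -> x d < b d.
Proof.
move=> [_ [z' [Hz [lt _]]]]; move: lt; rewrite ffunE /= eqxx => lt.
exact: leq_trans lt (Hz.1 d).
Qed.

Lemma F2 d : UP d -> ~ intw y d.
Proof.
move=> Hd Hi; case: Hx => _ /(_ d); apply; split => //.
have := Hi.1; rewrite /= => /eqP ->; exact: Hi.
Qed.

Lemma swapE (z : {ffun E -> nat}) a' c' d : swap z a' c' d = z d + (d == a') - (d == c').
Proof. by rewrite ffunE. Qed.

Lemma yi_acc i : acceptable ew ef b C v (yi i).
Proof.
case: (Hess i) => [[_ _ _ HCi] _]; split => //; split => d; rewrite swapE.
- case: (eqVneq d (a i)) => [->|_].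
    have := UPb (UPa i); rewrite yE ewa eqxx; lia.
  have := y_inB.1 d; lia.
- move=> nd; rewrite (y_inB.2 d nd); case: eqP => // E1; move: nd; rewrite E1 /= ewa eqxx //.
Qed.

Lemma F4 i d : UP d -> d != a i -> ~ intw (yi i) d.
Proof.
move=> Hd da Hi; case: (Hess i) => _ /(_ d Hd); apply => //.
by have := Hi.1; rewrite /= => /eqP.
Qed.

Lemma TE (I : {set 'I_k}) d : T I d = y d + nA I d - nC I d.
Proof. by rewrite ffunE. Qed.

Lemma nA_cases (I : {set 'I_k}) d : (nA I d = 0 /\ forall i, i \in I -> a i != d) \/
  (exists2 i, i \in I & a i = d /\ nA I d = 1).
Proof.
case: (cnt_cases I (P := fun i => a i == d)).
- by move=> i j /eqP Ei /eqP Ej; apply: ainj; rewrite Ei Ej.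
- by left.
- by move=> [i iI [/eqP H1 H2]]; right; exists i.
Qed.
Lemma nC_cases (I : {set 'I_k}) d : (nC I d = 0 /\ forall i, i \in I -> c i != d) \/
  (exists2 i, i \in I & c i = d /\ nC I d = 1).
Proof.
case: (cnt_cases I (P := fun i => c i == d)).
- by move=> i j /eqP Ei /eqP Ej; apply: cinj; rewrite Ei Ej.
- by left.
- by move=> [i iI [/eqP H1 H2]]; right; exists i.
Qed.

Lemma nC_a (I : {set 'I_k}) i : nC I (a i) = 0.
Proof. by case: (nC_cases I (a i)) => [[]//|[j _ [E1 _]]]; have := ca j i; rewrite E1 eqxx. Qed.
Lemma nA_c (I : {set 'I_k}) i : nA I (c i) = 0.
Proof. by case: (nA_cases I (c i)) => [[]//|[j _ [E1 _]]]; have := ca i j; rewrite E1 eqxx. Qed.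
Lemma nC_UP (I : {set 'I_k}) d : UP d -> nC I d = 0.
Proof. by move=> Hd; case: (nC_cases I d) => [[]//|[j _ [E1 _]]]; have := UPnc j Hd; rewrite E1 eqxx. Qed.
Lemma nA_in (I : {set 'I_k}) i : i \in I -> nA I (a i) = 1.
Proof.
move=> iI; case: (nA_cases I (a i)) => [[_ H]|[j _ [_ ->]]] //.
by have := H i iI; rewrite eqxx.
Qed.
Lemma nC_in (I : {set 'I_k}) i : i \in I -> nC I (c i) = 1.
Proof.
move=> iI; case: (nC_cases I (c i)) => [[_ H]|[j _ [_ ->]]] //.
by have := H i iI; rewrite eqxx.
Qed.
Lemma nC_le (I : {set 'I_k}) d : nC I d <= y d + nA I d.
Proof.
case: (nC_cases I d) => [[-> _]|[j _ [<- ->]]] //.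
have := yc j; lia.
Qed.


Lemma vmaxE (z z' : {ffun E -> nat}) g : vmax z z' g = maxn (z g) (z' g).
Proof. by rewrite ffunE. Qed.
Lemma vminE (z z' : {ffun E -> nat}) g : vmin z z' g = minn (z g) (z' g).
Proof. by rewrite ffunE. Qed.

Lemma T_gt_UP (I : {set 'I_k}) g : y g < T I g -> UP g.
Proof.
rewrite TE; case: (nA_cases I g) => [[-> _]|[i _ [<- _]]]; last by move=> _; apply: UPa.
lia.
Qed.

Lemma vmax_inB (z z' : {ffun E -> nat}) : inBw z -> inBw z' -> inBw (vmax z z').
Proof.
move=> [H1 H2] [H3 H4]; split => g; rewrite ffunE.
  by rewrite geq_max H1 H3.
by move=> ng; rewrite H2 // H4.
Qed.

Lemma vle_maxl (z z' : {ffun E -> nat}) : vle z (vmax z z').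
Proof. by move=> g; rewrite ffunE leq_maxl. Qed.
Lemma vle_maxr (z z' : {ffun E -> nat}) : vle z' (vmax z z').
Proof. by move=> g; rewrite ffunE leq_maxr. Qed.

Section LBsec.
Variables (I : {set 'I_k}) (T' : {ffun E -> nat}) (e : E).
Hypotheses (HT' : inBw T') (HTT : vle (T I) T')
  (Hoff : forall g, g != e -> T' g = T I g) (He : T' e = T I e \/ UP e).

Lemma T'cases g : T' g = T I g \/ (g = e /\ T' e <> T I e /\ UP e).
Proof.
case: (eqVneq g e) => [->|ge]; last by left; apply: Hoff.
case: (eqVneq (T' e) (T I e)) => [->|ne]; first by left.
by right; split => //; split; [apply/eqP | case: He => // /eqP; rewrite (negPf ne)].
Qed.

Lemma CN : Cw (vmax T' y) = y.
Proof.
apply: Gp y_acc (vmax_inB HT' y_inB) (vle_maxr _ _) _ => g.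
rewrite vmaxE => lt.
have lt2 : y g < T' g by lia.
apply: F2; case: (T'cases g) => [E1|[-> [_ //]]].
by apply: (T_gt_UP (I := I)); rewrite -E1.
Qed.

Lemma LB d : (d != e \/ T' e = T I e) -> T I d <= Cw T' d.
Proof.
move=> Hd.
have Td : T' d = T I d.
  case: Hd => [de|Ee]; first exact: Hoff.
  case: (eqVneq d e) => [->//|de]; exact: Hoff.
have HN := vmax_inB HT' y_inB.
case: (nA_cases I d) => [[nA0 _]|[i iI [ad nA1]]].
  have := HA2 HN HT' (vle_maxl _ _) d; rewrite vminE CN Td.
  have : T I d <= y d by rewrite TE nA0; lia.
  rewrite /minn; case: ltnP => //; lia.
have Hyi := yi_acc i.
have HZ := vmax_inB HT' Hyi.1.
have CZ : Cw (vmax T' (yi i)) = yi i.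
  apply: Gp Hyi HZ (vle_maxr _ _) _ => g; rewrite vmaxE => lt.
  have lt2 : yi i g < T' g by lia.
  case: (T'cases g) => [E1|[ge [ne UPe]]].
    rewrite E1 in lt2.
    move: lt2; rewrite TE swapE.
    case: (nA_cases I g) => [[-> _]|[j jI [ag _]]].
      case: (eqVneq g (c i)) => [->|gc].
        rewrite nC_in // caF /=; lia.
      lia.
    case: (eqVneq j i) => [ji|ji].
      subst j g; rewrite nA_in // nC_a eqxx acF /=; lia.
    move=> _; apply: F4; first by rewrite -ag; apply: UPa.
    by rewrite -ag; apply/eqP => /ainj; apply/eqP.
  apply: F4; first by rewrite ge.
  by rewrite ge; apply/eqP => ea; case: Hd => //; rewrite -ad -ea eqxx.
have := HA2 HZ HT' (vle_maxl _ _) d; rewrite vminE CZ Td.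
subst d; rewrite swapE TE nA_in // nC_a eqxx acF /=.
rewrite /minn; case: ltnP => //; lia.
Qed.

End LBsec.

Lemma T_inB (I : {set 'I_k}) : inBw (T I).
Proof.
split => d; rewrite TE.
  case: (nA_cases I d) => [[-> _]|[i _ [<- ->]]].
    have := y_inB.1 d; lia.
  have := UPb (UPa i); rewrite yE ewa eqxx; lia.
move=> nd; rewrite (y_inB.2 d nd).
case: (nA_cases I d) => [[-> _]|[i _ [ad _]]] //.
by move: nd; rewrite -ad /= ewa eqxx.
Qed.

Lemma T_acc (I : {set 'I_k}) : acceptable ew ef b C v (T I).
Proof.
split; first exact: T_inB.
apply/ffunP => d; apply/eqP; rewrite eqn_leq; apply/andP; split.
  by case: (HC1 (T_inB I)) => _; apply.
by apply: (@LB I (T I) d (T_inB I) (fun g _ => erefl) (or_introl erefl)); right.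
Qed.

Lemma vsizeT (I : {set 'I_k}) : vsize (T I) = vsize y.
Proof.
have H : \sum_(d : E) (T I d + nC I d) = \sum_(d : E) (y d + nA I d).
  apply: eq_bigr => d _; rewrite TE; have := nC_le I d; lia.
rewrite !big_split /= !sum_cnt in H; rewrite /vsize; lia.
Qed.

Lemma T_nint (I : {set 'I_k}) e : UP e -> ~ intw (T I) e.
Proof.
move=> UPe [inc [T' [HT' [lt [off lt2]]]]].
have HTT : vle (T I) T'.
  move=> g; case: (eqVneq g e) => [->|ge]; first exact: ltnW.
  by rewrite off.
have HN := vmax_inB HT' y_inB.
have H3 := HA3 HN HT' (vle_maxl _ _).
rewrite (CN HT' off (or_intror UPe)) -(vsizeT I) in H3.
have : vsize (T I) < vsize (Cw T').
  rewrite /vsize (bigD1 e) //= [X in _ < X](bigD1 e) //= -addSn.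
  apply: leq_add => //; apply: leq_sum => g ge.
  by apply: (LB HT' off (or_intror UPe)); left.
lia.
Qed.

Lemma nC_notin (I : {set 'I_k}) j : j \notin I -> nC I (c j) = 0.
Proof.
move=> jI; case: (nC_cases I (c j)) => [[]//|[i iI [/cinj ij _]]].
by move: jI; rewrite -ij iI.
Qed.

Lemma nAU1 (I : {set 'I_k}) j d : j \notin I -> nA (j |: I) d = (a j == d) + nA I d.
Proof. exact: (@cnt_U1 k I (fun i => a i == d) j). Qed.
Lemma nCU1 (I : {set 'I_k}) j d : j \notin I -> nC (j |: I) d = (c j == d) + nC I d.
Proof. exact: (@cnt_U1 k I (fun i => c i == d) j). Qed.

Lemma swapT (I : {set 'I_k}) j : j \notin I -> swap (T I) (a j) (c j) = T (j |: I).
Proof.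
move=> jI; apply/ffunP => d; rewrite swapE !TE nAU1 // nCU1 //.
case: (eqVneq d (c j)) => [->|dc].
  rewrite nA_c nC_notin // acF caF; have := yc j; lia.
have h1 : (c j == d) = false by rewrite eq_sym (negPf dc).
rewrite (eq_sym (a j) d) /= subn0 add0n [(d == a j) + _]addnC addnA addnBAC //; exact: nC_le.
Qed.

End Main.

Theorem corollary3p8 (W F E : finType) (ew : E -> W) (ef : E -> F) (b : E -> nat)
  (C : vert W F -> {ffun E -> nat} -> {ffun E -> nat})
  (Hsimple : simple_bip ew ef)
  (HC : choice_axioms ew ef b C)
  (x xmax : {ffun E -> nat})
  (Hx : stable ew ef b C x)
  (Hxmax : is_max_stable ew ef b C xmax)
  (Hneq : x <> xmax)
  (w : W) (k : nat) (c a : 'I_k -> E)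
  (Hdisj : forall i j : 'I_k, i != j ->
     [/\ c i != c j, c i != a j & a i != a j])
  (Hess : forall i : 'I_k, essential ew ef b C x w (restr ew ef (inl w) x) (c i) (a i))
  (I : {set 'I_k}) :
  let z := zI ew ef x w c a I in
  [/\ acceptable ew ef b C (inl w) z,
      (forall e, UFplus ew ef b C x e -> ~ interesting ew ef b C (inl w) z e) &
      (forall j : 'I_k, j \notin I -> essential ew ef b C x w z (c j) (a j))].
Proof.
move=> z; split.
- exact: (T_acc HC Hx Hdisj Hess).
- by move=> e UPe; apply: (T_nint HC Hx Hdisj Hess).
- move=> j jI; case: (Hess j) => [[H1 H2 H3 H4] _]; split.
    split => //.
      by rewrite /z TE (nA_c Hdisj Hess) (nC_notin Hdisj) // subn0 addn0.
    rewrite /z (swapT Hdisj Hess) //; exact: (T_acc HC Hx Hdisj Hess _).2.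
  move=> d UPd _ _; rewrite /z (swapT Hdisj Hess) //.
  exact: (T_nint HC Hx Hdisj Hess).
Qed.
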